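(* Let $m\ge2$, $s,\ell,r_1,\dots,r_m\ge1$ be integers, $k=m\ell-s$ with $k\ge\ell$, and $n=\sum_{i=1}^m(\ell+r_i)$. If $q$ is a prime power with $q>2(n-k)\binom{n-1}{k-1}$, then there exists an $[n,k,\ell;r_1,\dots,r_m]$-PMDS code over $\mathbb{F}_q$.
   Context: An $[n,k]$-MDS code over a field $\mathbb{F}$ is a linear code in $\mathbb{F}^n$ of dimension $k$ and minimum Hamming distance $n-k+1$. PMDS codes: let $\ell,m,r_1,\dots,r_m$ be positive integers, $n=\sum_{i=1}^m(r_i+\ell)$, and $C\subseteq\mathbb{F}^n$ a linear code of dimension $k<n$ with generator matrix $G=(B_1\mid\dots\mid B_m)$, $B_i\in\mathbb{F}^{k\times(r_i+\ell)}$. Then $C$ is an $[n,k,\ell;r_1,\dots,r_m]$-PMDS code if (i) for each $i$ the row space of $B_i$ is an $[r_i+\ell,\ell]$-MDS code, and (ii) for any choice of $r_i$ erased coordinates in the $i$-th block for every $i$, the code obtained from $C$ by puncturing these coordinates is an $[m\ell,k]$-MDS code. *)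

(* Defs.v *)
From HB Require Import structures.
From mathcomp Require Import all_boot all_order all_algebra all_field.
Set Implicit Arguments. Unset Strict Implicit. Unset Printing Implicit Defensive.
Import GRing.Theory.
Local Open Scope ring_scope.

(* Linear codes are given by generator matrices; the code is the row space. *)

Definition wt (F : fieldType) (N : nat) (v : 'rV[F]_N) : nat :=
  #|[set j : 'I_N | v 0 j != 0]|.

Definition keep_mx (F : fieldType) (N : nat) (S : {set 'I_N}) : 'M[F]_N :=
  diag_mx (\row_j (if j \in S then 1 else 0)).

(* Restriction of the code (row space of A) to the coordinates in S:
   the columns outside S are zeroed, so the row space of [restrict A S]
   is the (coordinate-wise) copy of the code punctured to S. *)
Definition restrict (F : fieldType) (K N : nat) (A : 'M[F]_(K, N))
  (S : {set 'I_N}) : 'M[F]_(K, N) := A *m keep_mx F S.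

Definition MDS_on (F : fieldType) (K N : nat) (A : 'M[F]_(K, N))
  (S : {set 'I_N}) (D : nat) : Prop :=
  let C := restrict A S in
  [/\ \rank C = D,
      (forall v : 'rV[F]_N, (v <= C)%MS -> v != 0 -> (#|S| - D + 1 <= wt v)%N)
    & exists2 v : 'rV[F]_N, (v <= C)%MS /\ v != 0 & wt v = (#|S| - D + 1)%N].

Definition block (N l m : nat) (r : 'I_m -> nat) (i : 'I_m) : {set 'I_N} :=
  [set j : 'I_N | (\sum_(i' < m | (i' < i)%N) (r i' + l) <= j)%N &&
                  (j < \sum_(i' < m | (i' <= i)%N) (r i' + l))%N].

Definition PMDS (F : fieldType) (k n l m : nat) (r : 'I_m -> nat)
  (G : 'M[F]_(k, n)) : Prop :=
  [/\ n = (\sum_(i < m) (r i + l))%N,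
      (k < n)%N,
      \rank G = k,
      (forall i : 'I_m, MDS_on G (block n l r i) l)
    & (forall E : {set 'I_n},
         (forall i : 'I_m, #|E :&: block n l r i| = r i) ->
         MDS_on G (~: E) k)].

(* Main.v *)
Require Import Defs.
From HB Require Import structures.
From mathcomp Require Import all_boot all_order all_algebra all_field.
From mathcomp Require Import zify.
Set Implicit Arguments. Unset Strict Implicit. Unset Printing Implicit Defensive.
Import GRing.Theory.


Section Sets.
Variable T : finType.

Lemma subset_size (A : {set T}) d : (d <= #|A|)%N ->
  exists2 Z : {set T}, Z \subset A & #|Z| = d.
Proof.
move=> dA; exists [set x in take d (enum A)].
  by apply/subsetP => x; rewrite inE => /mem_take; rewrite mem_enum.
rewrite cardsE; apply/eqP; rewrite (card_uniqP _) ?size_takel -?cardE //.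
exact: take_uniq (enum_uniq _).
Qed.

Lemma subset_ext (U0 P : {set T}) d : U0 \subset P -> (#|U0| <= d)%N -> (d <= #|P|)%N ->
  exists U : {set T}, [/\ U0 \subset U, U \subset P & #|U| = d].
Proof.
move=> sUP le1 le2.
have h : (d - #|U0| <= #|P :\: U0|)%N by rewrite cardsDS // leq_sub2r.
have [Z sZ cZ] := subset_size h.
exists (U0 :|: Z); split; first exact: subsetUl.
  by rewrite subUset sUP (subset_trans sZ) // subsetDl.
rewrite cardsU cZ.
have -> : U0 :&: Z = set0.
  apply/setP => x; rewrite !inE; apply/andP => [[xU xZ]].
  by move: (subsetP sZ x xZ); rewrite inE xU.
by rewrite cards0 subn0 subnKC.
Qed.

End Sets.

Section LinAlg.
Local Open Scope ring_scope.
Variables (F : finFieldType) (k n : nat) (g : 'I_n -> 'rV[F]_k).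

Definition rows (S : {set 'I_n}) : 'M[F]_(n, k) :=
  \matrix_(j, t) (if j \in S then g j 0 t else 0).
Definition Gm : 'M[F]_(k, n) := \matrix_(t, j) g j 0 t.

Lemma row_rows (S : {set 'I_n}) j : row j (rows S) = if j \in S then g j else 0.
Proof. by apply/rowP => t; rewrite !mxE; case: (j \in S); rewrite ?mxE. Qed.

Lemma restrict_tr (S : {set 'I_n}) : (restrict Gm S)^T = rows S.
Proof.
apply/matrixP => j t; rewrite /restrict /keep_mx mxE mul_mx_diag !mxE.
by case: (j \in S); rewrite ?mulr1 ?mulr0.
Qed.

Lemma rowsS (S T : {set 'I_n}) : S \subset T -> (rows S <= rows T)%MS.
Proof.
move=> sST; apply/row_subP => j; rewrite row_rows.
case: ifP => jS; last exact: sub0mx.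
by have := row_rows T j; rewrite (subsetP sST j jS) => <-; apply: row_sub.
Qed.

Lemma g_rows (S : {set 'I_n}) j : j \in S -> (g j <= rows S)%MS.
Proof. by move=> jS; have := row_rows S j; rewrite jS => <-; apply: row_sub. Qed.

Lemma rows_sub (S : {set 'I_n}) p (W : 'M[F]_(p, k)) : (forall j, j \in S -> (g j <= W)%MS) -> (rows S <= W)%MS.
Proof.
move=> H; apply/row_subP => j; rewrite row_rows; case: ifP => jS; last exact: sub0mx.
exact: H.
Qed.

Lemma rows0 : rows set0 = 0.
Proof. by apply/matrixP => j t; rewrite !mxE inE. Qed.

Lemma rowsU1 x (S : {set 'I_n}) : (rows (x |: S) == g x + rows S)%MS.
Proof.
apply/andP; split.
  apply/row_subP => j; rewrite row_rows in_setU1.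
  case: eqP => [->|_] /=; first exact: addsmxSl.
  case: ifP => jS; last exact: sub0mx.
  by apply: submx_trans (addsmxSr _ _); rewrite g_rows.
rewrite addsmx_sub g_rows ?setU11 //=.
by apply: rowsS; apply: subsetUr.
Qed.

Lemma rank_rows (S : {set 'I_n}) : (\rank (rows S) <= #|S|)%N.
Proof.
elim: {S}#|S| {-2}S (erefl #|S|) => [|c IH] S cS.
  by move/eqP: cS; rewrite cards_eq0 => /eqP ->; rewrite rows0 mxrank0.
have [x xS] : exists x, x \in S.
  by apply/set0Pn; rewrite -card_gt0 cS.
have defS : S = x |: (S :\ x) by rewrite setD1K.
rewrite defS (eqmx_rank (rowsU1 _ _)).
apply: leq_trans (mxrank_adds_leqif _ _) _.
have -> : #|x |: S :\ x| = (1 + #|S :\ x|)%N by rewrite cardsU1 setD11.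
rewrite leq_add ?rank_leq_row // IH //.
by move: cS; rewrite {1}defS cardsU1 setD11 /= add1n => [[]].
Qed.

Lemma rank_add1 p (y : 'rV[F]_k) (A : 'M[F]_(p, k)) :
  ~~ (y <= A)%MS -> \rank (y + A)%MS = (\rank A).+1.
Proof.
move=> yA; apply/eqP; rewrite eqn_leq; apply/andP; split.
  apply: leq_trans (mxrank_adds_leqif _ _) _.
  by rewrite -[(\rank A).+1]add1n leq_add2r rank_leq_row.
have := mxrank_leqif_sup (addsmxSr y A).
move/ltn_leqif => ->; apply: contra yA => H.
exact: submx_trans (addsmxSl y A) H.
Qed.


Lemma mx11_eq0 (M : 'M[F]_1) : (M == 0) = (M 0 0 == 0).
Proof.
apply/eqP/eqP => [->|h]; first by rewrite mxE.
by apply/matrixP => i j; rewrite !ord1 h mxE.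
Qed.

Lemma tr_eq0 p (M : 'M[F]_(p, k)) (x : 'rV[F]_k) :
  (x *m M^T == 0) = (M *m x^T == 0).
Proof. by rewrite -trmx_eq0 trmx_mul trmxK. Qed.

Lemma vcoef (x : 'rV[F]_k) (S : {set 'I_n}) j :
  (x *m restrict Gm S) 0 j = (row j (rows S) *m x^T) 0 0.
Proof.
have -> : (x *m restrict Gm S) 0 j = (x *m restrict Gm S)^T j 0 by rewrite [RHS]mxE.
by rewrite trmx_mul restrict_tr -row_mul [RHS]mxE.
Qed.

Lemma vcoef0 (x : 'rV[F]_k) (S : {set 'I_n}) j :
  ((x *m restrict Gm S) 0 j == 0) = (row j (rows S) <= kermx x^T)%MS.
Proof. by rewrite vcoef sub_kermx mx11_eq0. Qed.

Lemma wt_eq (x : 'rV[F]_k) (S : {set 'I_n}) :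
  wt (x *m restrict Gm S) = #|[set j | ~~ (row j (rows S) <= kermx x^T)%MS]|.
Proof. by apply: eq_card => j; rewrite !inE vcoef0. Qed.

Lemma v_eq0 (x : 'rV[F]_k) (S : {set 'I_n}) :
  (rows S <= kermx x^T)%MS -> x *m restrict Gm S = 0.
Proof.
move=> H; apply/matrixP => i j; rewrite ord1 [RHS]mxE; apply/eqP.
by rewrite vcoef0 (submx_trans (row_sub _ _) H).
Qed.

Lemma N_sub (x : 'rV[F]_k) (S : {set 'I_n}) :
  [set j | ~~ (row j (rows S) <= kermx x^T)%MS] \subset S.
Proof.
apply/subsetP => j; rewrite inE row_rows; case: ifP => //.
by rewrite sub0mx.
Qed.

Lemma MDS_from (S : {set 'I_n}) (W : 'M[F]_k) (D : nat) :
  (forall j, j \in S -> (g j <= W)%MS) -> \rank W = D ->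
  (forall Z : {set 'I_n}, Z \subset S -> #|Z| = D -> (W <= rows Z)%MS) ->
  (0 < D)%N -> (D <= #|S|)%N -> MDS_on Gm S D.
Proof.
move=> hS rW hZ D0 DS.
have SW : (rows S <= W)%MS by apply: rows_sub.
have WS : (W <= rows S)%MS.
  have [Z0 sZ0 cZ0] := subset_size DS.
  exact: submx_trans (hZ _ sZ0 cZ0) (rowsS sZ0).
have DK : (D <= k)%N by rewrite -rW rank_leq_col.
have bound : forall v : 'rV[F]_n, (v <= restrict Gm S)%MS -> v != 0 ->
    (#|S| - D + 1 <= wt v)%N.
  move=> v /submxP [x ->] nz; rewrite wt_eq.
  set N := [set j | _]; have sN : N \subset S := N_sub x S.
  rewrite leqNgt; apply/negP => lt.
  have h : (D <= #|S :\: N|)%N.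
    by rewrite cardsDS //; move: lt DS; move: #|N| #|S| => a b; lia.
  have [Z sZ cZ] := subset_size h.
  have ZK : (rows Z <= kermx x^T)%MS.
    apply: rows_sub => j jZ; move: (subsetP sZ j jZ); rewrite !inE negbK.
    by case/andP => h1 jS; move: h1; rewrite row_rows jS.
  have SK : (rows S <= kermx x^T)%MS.
    exact: submx_trans SW (submx_trans (hZ _ (subset_trans sZ (subsetDl _ _)) cZ) ZK).
  by move: nz; rewrite v_eq0 ?eqxx.
split => //.
  by rewrite -mxrank_tr restrict_tr; apply/eqP; rewrite -rW eqn_leq !mxrankS.
have h : (D.-1 <= #|S|)%N by exact: leq_trans (leq_pred _) DS.
have [U sU cU] := subset_size h.
pose A := kermx (rows U)^T; pose B := kermx W^T.
have nAB : ~~ (A <= B)%MS.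
  apply/negP => /mxrankS; rewrite /A /B !mxrank_ker !mxrank_tr rW.
  have := rank_rows U; rewrite cU; lia.
case/row_subPn: nAB => i; set x := row i A => xB.
have xA : (x <= A)%MS by apply: row_sub.
have UK : (rows U <= kermx x^T)%MS.
  by move: xA; rewrite /A !sub_kermx tr_eq0.
have WK : ~~ (W <= kermx x^T)%MS.
  by move: xB; rewrite /B !sub_kermx tr_eq0.
exists (x *m restrict Gm S).
  split; first exact: submxMl.
  apply/negP => /eqP v0; move/negP: WK; apply; apply: submx_trans WS _.
  apply/row_subP => j; rewrite -vcoef0 v0 mxE.
  done.
apply/eqP; rewrite eqn_leq bound ?submxMl //; last first.
  apply/negP => /eqP v0; move/negP: WK; apply; apply: submx_trans WS _.
  by apply/row_subP => j; rewrite -vcoef0 v0 mxE.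
rewrite wt_eq.
have : [set j | ~~ (row j (rows S) <= kermx x^T)%MS] \subset S :\: U.
  apply/subsetP => j jN; have jS := subsetP (N_sub x S) j jN.
  rewrite inE jS andbT; apply/negP => jU; move: jN; rewrite inE.
  by rewrite row_rows jS (submx_trans (g_rows jU) UK).
rewrite andbT; move/subset_leq_card; rewrite cardsDS // cU => hc.
apply: leq_trans hc _; rewrite -subn1; move: #|S| => a; lia.
Qed.

End LinAlg.

Section Count.
Local Open Scope ring_scope.
Variables (F : finFieldType) (k : nat).

Lemma card_subspace (B : 'M[F]_k) :
  #|[set y : 'rV[F]_k | (y <= B)%MS]| = (#|F| ^ \rank B)%N.
Proof.
have -> : [set y : 'rV[F]_k | (y <= B)%MS] =
   (fun x : 'rV[F]_(\rank B) => x *m row_base B) @: setT.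
  apply/setP => y; rewrite inE; apply/idP/imsetP.
    by rewrite -(eq_row_base B) => /submxP [x ->]; exists x; rewrite ?inE.
  by move=> [x _ ->]; rewrite -(eq_row_base B) submxMl.
rewrite card_imset; last exact: row_free_inj (row_base_free B).
by rewrite cardsT card_mx mul1n.
Qed.

Lemma card_bigcup_le (I : finType) (A : {set I}) (B : I -> {set 'rV[F]_k}) :
  (#|\bigcup_(i in A) B i| <= \sum_(i in A) #|B i|)%N.
Proof.
elim/big_ind2: _ => [|X1 c1 X2 c2 h1 h2|i _]; rewrite ?cards0 //.
by rewrite cardsU; apply: leq_trans (leq_subr _ _) (leq_add h1 h2).
Qed.

Lemma avoid (V : 'M[F]_k) (I : finType) (A : {set I}) p (W : I -> 'M[F]_(p, k)) :
  (#|A| < #|F|)%N -> (0 < \rank V)%N -> (forall i, i \in A -> ~~ (V <= W i)%MS) ->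
  exists y : 'rV[F]_k, (y <= V)%MS /\ forall i, i \in A -> ~~ (y <= W i)%MS.
Proof.
move=> cA rV hW.
pose Bad := \bigcup_(i in A) [set y : 'rV[F]_k | (y <= V :&: W i)%MS].
have : ~~ ([set y : 'rV[F]_k | (y <= V)%MS] \subset Bad).
  apply/negP => /subset_leq_card; rewrite card_subspace.
  apply/negP; rewrite -ltnNge; apply: leq_ltn_trans (card_bigcup_le _ _) _.
  have q0 : (0 < #|F|)%N by apply/card_gt0P; exists 0.
  apply: (@leq_ltn_trans (\sum_(i in A) #|F| ^ (\rank V).-1)%N).
    apply: leq_sum => i iA; rewrite card_subspace leq_pexp2l //.
    rewrite -ltnS prednK //; have := mxrank_leqif_eq (capmxSl V (W i)).
    move/ltn_leqif => ->; apply: contra (hW i iA) => /andP [_ e].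
    exact: submx_trans e (capmxSr _ _).
  rewrite sum_nat_const -{2}(prednK rV) expnS ltn_mul2r cA andbT.
  by rewrite expn_gt0 q0.
case/subsetPn => y; rewrite inE => yV yB; exists y; split => // i iA.
apply: contra yB => yW; apply/bigcupP; exists i => //.
by rewrite inE sub_capmx yV.
Qed.

End Count.
Lemma sum_sub_le (I : finType) (P Q : pred I) (F : I -> nat) :
  (forall i, P i -> Q i) -> (\sum_(i | P i) F i <= \sum_(i | Q i) F i)%N.
Proof.
move=> PQ; rewrite [X in (X <= _)%N]big_mkcond [X in (_ <= X)%N]big_mkcond.
apply: leq_sum => i _; case: ifP => Pi; first by rewrite PQ.
by case: ifP.
Qed.

Lemma card_interval n a b : (b <= n)%N ->
  #|[set j : 'I_n | (a <= j < b)%N]| = (b - a)%N.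
Proof.
move=> bn; rewrite -sum1_card (big_mkcond (fun j : 'I_n => j \in _)) /=.
rewrite (eq_bigr (fun j : 'I_n => ((a <= j < b)%N : nat))); last first.
  by move=> j _; rewrite inE; case: (_ && _).
rewrite -(big_mkord xpredT (fun j => ((a <= j < b)%N : nat))).
rewrite (big_cat_nat (leq0n b) bn) /= [X in (_ + X)%N]big1_seq ?addn0; last first.
  by move=> j /andP [_]; rewrite mem_index_iota => /andP [bj _]; rewrite ltnNge bj andbF.
have [ab|ba] := leqP a b; last first.
  rewrite big1_seq; first by move/ltnW: ba; rewrite -subn_eq0 => /eqP ->.
  move=> j /andP [_]; rewrite mem_index_iota => /andP [_ jb].
  by rewrite jb andbT leqNgt (ltn_trans jb ba).
rewrite (big_cat_nat (leq0n a) ab) /= big1_seq ?add0n; last first.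
  by move=> j /andP [_]; rewrite mem_index_iota => /andP [_ ja]; rewrite leqNgt ja.
rewrite (eq_big_nat _ _ (F2 := fun _ => 1%N)) ?sum_nat_const_nat ?muln1 //.
by move=> j ->.
Qed.

Section Blocks.
Variables (n l m : nat) (r : 'I_m -> nat).
Hypothesis Hn : n = (\sum_(i < m) (r i + l))%N.

Local Notation blk := (block n l r).
Definition start (i : 'I_m) := (\sum_(i' < m | (i' < i)%N) (r i' + l))%N.
Definition stop (i : 'I_m) := (\sum_(i' < m | (i' <= i)%N) (r i' + l))%N.

Lemma stopE (i : 'I_m) : stop i = (start i + (r i + l))%N.
Proof.
rewrite /stop (bigD1 i) ?leqnn // [RHS]addnC /start.
congr (_ + _)%N; apply: eq_bigl => i'.
by rewrite ltn_neqAle val_eqE andbC.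
Qed.
Lemma stop_le (i : 'I_m) : (stop i <= n)%N.
Proof. by rewrite Hn; apply: sum_sub_le. Qed.

Lemma stop_start (i i' : 'I_m) : (i < i')%N -> (stop i <= start i')%N.
Proof. by move=> lt; apply: sum_sub_le => j /= ji; exact: leq_ltn_trans ji lt. Qed.

Lemma card_blk (i : 'I_m) : #|blk i| = (r i + l)%N.
Proof.
rewrite /block card_interval; last exact: stop_le.
by rewrite -/(stop i) -/(start i) stopE addKn.
Qed.

Lemma blk_uniq (j : 'I_n) (i i' : 'I_m) : j \in blk i -> j \in blk i' -> i = i'.
Proof.
rewrite !inE -/(stop i) -/(start i) -/(stop i') -/(start i') => /andP [a1 b1] /andP [a2 b2].
case: (ltngtP i i') => [lt|lt|e]; last exact: val_inj.
  by have := leq_ltn_trans (leq_trans (stop_start lt) a2) b1; rewrite ltnn.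
by have := leq_ltn_trans (leq_trans (stop_start lt) a1) b2; rewrite ltnn.
Qed.

Lemma blk_cover (j : 'I_n) : exists i, j \in blk i.
Proof.
have [m0|m0] := posnP m.
  exfalso; have := ltn_ord j; rewrite {2}Hn big1 // => i _.
  by exfalso; case: i => i0 hi; have := hi; rewrite m0.
have lm : (m.-1 < m)%N by rewrite ltn_predL.
pose imax := Ordinal lm.
have Pmax : (j < stop imax)%N.
  suff -> : stop imax = n by exact: ltn_ord.
  rewrite Hn /stop; apply: eq_bigl => i' /=.
  by rewrite -ltnS prednK ?ltn_ord.
case: (@arg_minnP _ imax (fun i : 'I_m => (j < stop i)%N) (fun i : 'I_m => val i) Pmax) => i Pi imin.
exists i; rewrite /block inE -/(stop i) Pi andbT -/(start i).
case: i Pi imin => [[|i1] hi] Pi imin.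
  by rewrite /start big_pred0.
have hi1 : (i1 < m)%N by apply: ltnW.
have : ~~ (j < stop (Ordinal hi1))%N.
  by apply/negP => /imin /=; rewrite ltnn.
rewrite -leqNgt; congr (_ <= _)%N; apply: eq_bigl => i' /=.
Qed.

Lemma card_part (A : {set 'I_n}) : #|A| = (\sum_(i < m) #|A :&: blk i|)%N.
Proof.
have e : forall i, #|A :&: blk i| = (\sum_(j in A) (j \in blk i : nat))%N.
  move=> i; rewrite -sum1_card big_mkcond /= [RHS]big_mkcond /=.
  by apply: eq_bigr => j _; rewrite inE; case: (j \in A); case: (j \in blk i).
rewrite (eq_bigr _ (fun i _ => e i)) exchange_big /= -sum1_card.
apply: eq_bigr => j _; have [i ji] := blk_cover j.
rewrite (bigD1 i) //= ji big1 // => i' ne; apply/eqP; rewrite eqb0.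
by apply: contra ne => ji'; rewrite (blk_uniq ji ji').
Qed.

End Blocks.


Lemma ar_pred p q : (p < q)%N -> (p <= q.-1)%N. Proof. lia. Qed.
Lemma ar_predle p q : (p <= q)%N -> (p.-1 <= q.-1)%N. Proof. lia. Qed.
Lemma ar_kk k : (0 < k)%N -> (k <= k.-1)%N = false. Proof. lia. Qed.
Lemma ar_sub0 a b : (b - a = 0)%N -> (a <= b)%N -> a = b. Proof. lia. Qed.
Lemma ar_ml a k (b : bool) : (0 < k)%N -> (a <= k.-1)%N -> (b + a <= k)%N. Proof. case: b; lia. Qed.
Lemma ar_e1 a b e : (b - a = e.+1)%N -> (b - (true + a) = e)%N. Proof. rewrite /=; lia. Qed.
Lemma ar_e2 a b e : (b - a = e.+1)%N -> (true + a <= b)%N. Proof. rewrite /=; lia. Qed.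
Lemma ar_k k : (0 < k)%N -> (true + k.-1)%N = k. Proof. rewrite /=; lia. Qed.

Section Greedy.
Local Open Scope ring_scope.
Variables (F : finFieldType) (n l m k : nat) (r : 'I_m -> nat).
Hypothesis Hn : n = (\sum_(i < m) (r i + l))%N.
Hypotheses (l1 : (0 < l)%N) (lk : (l <= k)%N) (kml : (k < m * l)%N).
Hypothesis Hq : ('C(n.-1, k.-1) < #|F|)%N.
Variable infoB : 'I_m -> {set 'I_n}.
Hypothesis infoB_sub : forall i, infoB i \subset block n l r i.
Hypothesis infoB_card : forall i, #|infoB i| = l.

Local Notation blk := (block n l r).
Definition adm (T : {set 'I_n}) := [forall i, (#|T :&: blk i| <= l)%N].
Definition infoS := \bigcup_(i < m) infoB i.
Definition Inv (g : 'I_n -> 'rV[F]_k) (P : {set 'I_n}) :=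
  forall T : {set 'I_n}, T \subset P -> adm T -> (#|T| <= k)%N -> \rank (rows g T) = #|T|.

Lemma adm_sub (T T' : {set 'I_n}) : T \subset T' -> adm T' -> adm T.
Proof.
move=> sT /forallP h; apply/forallP => i; apply: leq_trans (h i).
by apply: subset_leq_card; apply: setSI.
Qed.

Lemma info_blk x i : x \in infoS -> x \in blk i -> x \in infoB i.
Proof.
case/bigcupP => i' _ xi' xb.
by have := blk_uniq (subsetP (infoB_sub i') x xi') xb => e; rewrite -e.
Qed.

Lemma adm_info (T : {set 'I_n}) : T \subset infoS -> adm T.
Proof.
move=> sT; apply/forallP => i; rewrite -[X in (_ <= X)%N](infoB_card i); apply: subset_leq_card.
apply/subsetP => x; rewrite inE => /andP [xT xb].
exact: info_blk (subsetP sT x xT) xb.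
Qed.

Lemma card_U1I x (A B : {set 'I_n}) : (#|(x |: A) :&: B| <= (x \in B) + #|A :&: B|)%N.
Proof.
case xB: (x \in B).
  have -> : (x |: A) :&: B = x |: (A :&: B).
    by apply/setP => y; rewrite !inE; case: eqP => [->|]; rewrite ?xB ?andbT.
  by rewrite cardsU1; case: (_ \notin _).
have -> : (x |: A) :&: B = A :&: B.
  by apply/setP => y; rewrite !inE; case: eqP => [->|]; rewrite ?xB ?andbF.
by [].
Qed.

Lemma adm_add x i (A : {set 'I_n}) : x \in blk i -> (#|A :&: blk i| < l)%N -> adm A ->
  adm (x |: A).
Proof.
move=> xb lt /forallP h; apply/forallP => i'; apply: leq_trans (card_U1I _ _ _) _.
case: (eqVneq i' i) => [->|ne]; first by rewrite xb.
have -> : (x \in blk i') = false.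
  by apply/negP => xb'; move: ne; rewrite (blk_uniq xb xb') eqxx.
exact: h.
Qed.

Lemma adm_extend (A : {set 'I_n}) : adm A -> (#|A| < m * l)%N ->
  exists x, [/\ x \in infoS, x \notin A & adm (x |: A)].
Proof.
move=> aA cA.
have [i lt] : exists i, (#|A :&: blk i| < l)%N.
  apply/existsP; apply: contraLR cA; rewrite negb_exists => /forallP h.
  have e : (\sum_(i < m) l)%N = (m * l)%N by rewrite sum_nat_const card_ord.
  rewrite -leqNgt (card_part Hn) -e.
  by apply: leq_sum => i _; rewrite leqNgt h.
have : ~~ (infoB i \subset A).
  apply: contraL lt => sA; rewrite -leqNgt -{1}(infoB_card i).
  by apply: subset_leq_card; rewrite subsetI sA infoB_sub.
case/subsetPn => x xi xA; exists x; split => //.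
  by apply/bigcupP; exists i.
exact: adm_add (subsetP (infoB_sub i) x xi) lt aA.
Qed.

Lemma rows_eq (g1 g2 : 'I_n -> 'rV[F]_k) (T : {set 'I_n}) :
  (forall j, j \in T -> g1 j = g2 j) -> rows g1 T = rows g2 T.
Proof.
move=> h; apply/matrixP => j t; rewrite !mxE.
by case: ifP => // jT; rewrite h.
Qed.

Lemma step (g : 'I_n -> 'rV[F]_k) (P : {set 'I_n}) c (V : 'M[F]_k) d :
  c \notin P -> Inv g P -> (0 < \rank V)%N -> (d <= k.-1)%N -> ('C(#|P|, d) < #|F|)%N ->
  (forall U : {set 'I_n}, U \subset P -> adm (c |: U) -> #|U| = d -> ~~ (V <= rows g U)%MS) ->
  (forall U0 : {set 'I_n}, U0 \subset P -> adm (c |: U0) -> (#|U0| <= k.-1)%N ->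
      exists U : {set 'I_n}, [/\ U0 \subset U, U \subset P, adm (c |: U) & #|U| = d]) ->
  exists y, (y <= V)%MS /\ Inv (fun j => if j == c then y else g j) (c |: P).
Proof.
move=> cP inv rV dk cq hav hext.
pose UU := [set U : {set 'I_n} | [&& U \subset P, adm (c |: U) & #|U| == d]].
have cUU : (#|UU| < #|F|)%N.
  apply: leq_ltn_trans cq; rewrite -cards_draws; apply: subset_leq_card.
  by apply/subsetP => U; rewrite !inE => /and3P [-> _ ->].
have hav' : forall U, U \in UU -> ~~ (V <= rows g U)%MS.
  by move=> U; rewrite inE => /and3P [sU aU /eqP cU]; apply: hav.
have [y [yV yav]] := @avoid F k V _ UU _ (rows g) cUU rV hav'.
exists y; split => // T sT aT cT.
set g' := fun j => _.
case cT': (c \in T); last first.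
  have sTP : T \subset P.
    apply/subsetP => x xT; move: (subsetP sT x xT); rewrite in_setU1.
    by case: eqP => [e|] //=; move: xT; rewrite e cT'.
  rewrite (rows_eq (g2 := g)); first exact: inv.
  by move=> j jT; rewrite /g'; case: eqP => // e; move: jT; rewrite e cT'.
pose U0 := T :\ c.
have sU0 : U0 \subset P.
  apply/subsetP => x; rewrite !inE => /andP [xc xT].
  by move: (subsetP sT x xT); rewrite in_setU1 (negbTE xc).
have eT : T = c |: U0 by rewrite setD1K.
have cU0 : #|T| = #|U0|.+1 by rewrite eT cardsU1 setD11.
have [U [sU0U sUP aU cU]] : exists U : {set 'I_n}, [/\ U0 \subset U, U \subset P, adm (c |: U) & #|U| = d].
  apply: hext => //; first by rewrite -eT.
  by move: cT; rewrite cU0; case: (k) => //= k' /[!ltnS].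
have yU : ~~ (y <= rows g U)%MS by apply: yav; rewrite inE sUP aU cU eqxx.
have yU0 : ~~ (y <= rows g U0)%MS.
  by apply: contra yU => h; exact: submx_trans h (rowsS g sU0U).
rewrite eT (eqmx_rank (rowsU1 _ _ _)) /g' eqxx.
rewrite (rows_eq (g2 := g)); last first.
  by move=> j; rewrite !inE => /andP [jc _]; rewrite (negbTE jc).
rewrite (rank_add1 yU0) inv //.
- by rewrite -eT cU0.
- by apply: adm_sub aT; rewrite eT subsetUr.
- by move: cT; rewrite cU0; apply: ltnW.
Qed.


Hypothesis kn : (k <= n)%N.

Lemma binom_le p d : (p < n)%N -> d = minn p k.-1 -> ('C(p, d) < #|F|)%N.
Proof.
move=> pn ->; apply: (leq_ltn_trans _ Hq).
have [pk|pk] := leqP p k.-1.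
  by rewrite binn bin_gt0 ar_predle.
by apply: leq_bin2l; apply: ar_pred.
Qed.

Lemma card_lt (P : {set 'I_n}) c : c \notin P -> (#|P| < n)%N.
Proof.
move=> cP; have := subset_leq_card (subsetT (c |: P)).
by rewrite cardsT card_ord cardsU1 cP.
Qed.

Lemma phaseA (s : seq 'I_n) : uniq s -> {subset s <= infoS} ->
  exists g, Inv g [set x in s].
Proof.
elim/last_ind: s => [|s c IH].
  move=> _ _; exists (fun _ => 0) => T sT _ _.
  have -> : T = set0.
    apply/setP => x; rewrite inE; apply/negP => xT.
    by have := subsetP sT x xT; rewrite inE.
  by rewrite rows0 mxrank0 cards0.
rewrite rcons_uniq => /andP [cs us] sub.
have [g inv] : exists g, Inv g [set x in s].
  by apply: IH => // x xs; apply: sub; rewrite mem_rcons in_cons xs orbT.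
set P := [set x in s].
have eP : [set x in rcons s c] = c |: P.
  by apply/setP => x; rewrite !inE mem_rcons in_cons.
have cP : c \notin P by rewrite inE.
have cI : c \in infoS by apply: sub; rewrite mem_rcons in_cons eqxx.
have PI : P \subset infoS.
  by apply/subsetP => x; rewrite inE => xs; apply: sub; rewrite mem_rcons in_cons xs orbT.
have dk : (minn #|P| k.-1 <= k.-1)%N by apply: geq_minr.
have : exists y, (y <= 1%:M)%MS /\ Inv (fun j => if j == c then y else g j) (c |: P).
  apply: (@step g P c 1%:M (minn #|P| k.-1)) => //.
  - by rewrite mxrank1 (leq_trans l1 lk).
  - exact: binom_le (card_lt cP) (erefl _).
  - move=> U sU aU cU; apply/negP => /mxrankS; rewrite mxrank1 => h.
    have := leq_trans (leq_trans h (rank_rows g U)); rewrite cU => /(_ _ (geq_minr #|P| k.-1)).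
    by rewrite ar_kk // (leq_trans l1 lk).
  - move=> U0 sU0 aU0 cU0.
    have h1 : (#|U0| <= minn #|P| k.-1)%N by rewrite leq_min cU0 subset_leq_card.
    have [U [s1 s2 s3]] := subset_ext sU0 h1 (geq_minl _ _).
    exists U; split => //; apply: adm_info.
    by rewrite subUset sub1set cI (subset_trans s2 PI).
by case=> y [_ inv']; exists (fun j => if j == c then y else g j); rewrite eP.
Qed.

Definition Inv2 (g : 'I_n -> 'rV[F]_k) (P : {set 'I_n}) :=
  forall j i, j \in P -> j \in blk i -> (g j <= rows g (infoB i))%MS.

Lemma ext_B (P : {set 'I_n}) c : infoS \subset P -> c \notin P ->
  forall e (U0 : {set 'I_n}), (k.-1 - #|U0|)%N = e -> U0 \subset P -> adm (c |: U0) ->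
  (#|U0| <= k.-1)%N ->
  exists U : {set 'I_n}, [/\ U0 \subset U, U \subset P, adm (c |: U) & #|U| = k.-1].
Proof.
move=> IP cP; elim=> [|e IH] U0 eU0 sU0 aU0 cU0.
  by exists U0; split => //; apply: ar_sub0.
have ml : (#|c |: U0| < m * l)%N.
  by rewrite cardsU1; apply: leq_ltn_trans kml; apply: ar_ml => //; apply: leq_trans l1 lk.
have [x [xI xU axU]] := adm_extend aU0 ml.
have xU0 : x \notin U0 by apply: contra xU => h; rewrite in_setU1 h orbT.
have h1 : (k.-1 - #|x |: U0|)%N = e by rewrite cardsU1 xU0; apply: ar_e1.
have h2 : x |: U0 \subset P by rewrite subUset sub1set (subsetP IP) // sU0.
have h3 : adm (c |: (x |: U0)) by rewrite setUCA.
have h4 : (#|x |: U0| <= k.-1)%N by rewrite cardsU1 xU0; apply: ar_e2 eU0.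
have [U [s1 s2 s3 s4]] := IH (x |: U0) h1 h2 h3 h4.
by exists U; split => //; apply: subset_trans s1; apply: subsetUr.
Qed.

Lemma phaseB (s : seq 'I_n) : uniq s -> (forall x, x \in s -> x \notin infoS) ->
  exists g, Inv g (infoS :|: [set x in s]) /\ Inv2 g (infoS :|: [set x in s]).
Proof.
elim/last_ind: s => [|s c IH].
  move=> _ _; have [g inv] := phaseA (enum_uniq (mem infoS)) (fun x => ltac:(by rewrite mem_enum)).
  have e1 : [set x in enum infoS] = infoS by apply/setP => x; rewrite inE mem_enum.
  have e2 : infoS :|: [set x in [::]] = infoS by apply/setP => x; rewrite !inE orbF.
  exists g; rewrite e2 -{1}e1; split => // j i jI ji.
  by apply: g_rows; apply: info_blk.
rewrite rcons_uniq => /andP [cs us] nI.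
have [g [inv inv2]] : exists g, Inv g (infoS :|: [set x in s]) /\ Inv2 g (infoS :|: [set x in s]).
  by apply: IH => // x xs; apply: nI; rewrite mem_rcons in_cons xs orbT.
set P := infoS :|: [set x in s].
have eP : infoS :|: [set x in rcons s c] = c |: P.
  by apply/setP => x; rewrite !inE mem_rcons in_cons; case: (x == c); rewrite ?orbT.
have cI : c \notin infoS by apply: nI; rewrite mem_rcons in_cons eqxx.
have cP : c \notin P by rewrite !inE negb_or cI.
have IP : infoS \subset P by apply: subsetUl.
have [i ci] := blk_cover Hn c.
have iI : infoB i \subset infoS by apply/subsetP => x xi; apply/bigcupP; exists i.
have rV : \rank (rows g (infoB i)) = l.
  rewrite inv ?infoB_card //; first exact: subset_trans iI IP.
  exact: adm_info.
have : exists y, (y <= <<rows g (infoB i)>>)%MS /\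
    Inv (fun j => if j == c then y else g j) (c |: P).
  apply: (@step g P c <<rows g (infoB i)>>%MS k.-1) => //.
  - by rewrite mxrank_gen rV.
  - apply: (leq_ltn_trans _ Hq); apply: leq_bin2l.
    exact: ar_pred (card_lt cP).
  - move=> U sU aU cU; apply/negP; rewrite genmxE => VU.
    have cUb : (#|U :&: blk i| < l)%N.
      have cU' : c \notin U :&: blk i by rewrite inE negb_and (contra (subsetP sU c)).
      have := cardsU1 c (U :&: blk i); rewrite cU' add1n => e.
      rewrite -ltnS -e ltnS; apply: leq_trans (forallP aU i).
      apply: subset_leq_card; apply/subsetP => x.
      rewrite in_setU1; case/orP => [/eqP ->|]; first by rewrite in_setI in_setU1 eqxx ci.
      by rewrite !in_setI in_setU1 => /andP [-> ->]; rewrite orbT.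
    have : ~~ (infoB i \subset U).
      apply/negP => iU; move: cUb; rewrite ltnNge -{1}(infoB_card i).
      by rewrite subset_leq_card // subsetI iU infoB_sub.
    case/subsetPn => x xi xU.
    have aU' : adm U by apply: adm_sub aU; apply: subsetUr.
    have ax : adm (x |: U) := adm_add (subsetP (infoB_sub i) x xi) cUb aU'.
    have k0 : (0 < k)%N := leq_trans l1 lk.
    have sxP : x |: U \subset P by rewrite subUset sub1set (subsetP IP) ?(subsetP iI) ?sU.
    have cx : #|x |: U| = k by rewrite cardsU1 xU cU /= add1n prednK.
    have := inv (x |: U) sxP ax; rewrite cx => /(_ (leqnn k)) rk.
    have : (rows g (x |: U) <= rows g U)%MS.
      apply: rows_sub => j; rewrite in_setU1; case: eqP => [->|_] /= jU.
        exact: submx_trans (g_rows g xi) VU.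
      exact: g_rows.
    move/mxrankS; rewrite rk; move: (rank_rows g U); rewrite cU => h1 h2.
    by have := leq_trans h2 h1; rewrite ar_kk.
  - move=> U0 sU0 aU0 cU0; exact: (ext_B IP cP (erefl _)).
case=> y [yV inv']; rewrite genmxE in yV; exists (fun j => if j == c then y else g j); rewrite eP; split => //.
move=> j i' jP ji'.
rewrite (rows_eq (g2 := g)); last first.
  move=> j' j'i; case: eqP => // e; move: cI; rewrite -e => /negP [].
  by apply/bigcupP; exists i'.
case: eqP => [e|ne].
  by move: ji'; rewrite e => ci'; rewrite -(blk_uniq ci ci').
apply: inv2 => //; move: jP; rewrite in_setU1; case: eqP => //.
Qed.

Lemma greedy : exists g, Inv g setT /\ Inv2 g setT.
Proof.
have nI : forall x, x \in enum (~: infoS) -> x \notin infoS.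
  by move=> x; rewrite mem_enum inE.
have [g [h1 h2]] := phaseB (enum_uniq (mem (~: infoS))) nI.
have e : infoS :|: [set x in enum (~: infoS)] = setT.
  by apply/setP => x; rewrite !inE mem_enum inE orbN.
by exists g; rewrite -e.
Qed.

End Greedy.

Unset Implicit Arguments.


Lemma ar_kml m s l : (2 <= m)%N -> (1 <= s)%N -> (1 <= l)%N -> (m * l - s < m * l)%N.
Proof. nia. Qed.
Lemma ar_q a b c d : (a < b)%N -> (2 * (b - a) * c < d)%N -> (c < d)%N.
Proof. nia. Qed.
Lemma ar_sub a b : (a + b - a)%N = b. Proof. lia. Qed.

Theorem corollary21 (m s l : nat) (r : 'I_m -> nat) (k n : nat)
  (F : finFieldType) :
  (2 <= m)%N -> (1 <= s)%N -> (1 <= l)%N -> (forall i, 1 <= r i)%N ->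
  k = (m * l - s)%N -> (l <= k)%N ->
  n = (\sum_(i < m) (l + r i))%N ->
  (2 * (n - k) * 'C(n - 1, k - 1) < #|F|)%N ->
  exists G : 'M[F]_(k, n), PMDS l r G.
Proof.
move=> m2 s1 l1 r1 ek lk en hq.
have nE : n = (\sum_(i < m) (r i + l))%N.
  by rewrite en; apply: eq_bigr => i _; rewrite addnC.
have ml : (k < m * l)%N by rewrite ek; apply: ar_kml.
have nE2 : n = (\sum_(i < m) r i + m * l)%N.
  by rewrite nE big_split /= sum_nat_const card_ord mulnC.
have kn' : (k < n)%N by rewrite nE2; apply: leq_trans ml (leq_addl _ _).
have kn : (k <= n)%N := ltnW kn'.
have Hq : ('C(n.-1, k.-1) < #|F|)%N by rewrite -!subn1; apply: ar_q hq.
pose infoB (i : 'I_m) := odflt set0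
  [pick Z : {set 'I_n} | (Z \subset block n l r i) && (#|Z| == l)].
have infoB_spec : forall i, infoB i \subset block n l r i /\ #|infoB i| = l.
  move=> i; rewrite /infoB; case: pickP => [Z /andP [h1 /eqP h2] | none] //=.
  have hb : (l <= #|block n l r i|)%N by rewrite (card_blk nE) leq_addl.
  have [Z h1 h2] := subset_size hb.
  by move: (none Z); rewrite h1 h2 eqxx.
have infoB_sub : forall i, infoB i \subset block n l r i by move=> i; case: (infoB_spec i).
have infoB_card : forall i, #|infoB i| = l by move=> i; case: (infoB_spec i).
have [g [inv inv2]] := greedy nE l1 lk ml Hq infoB_sub infoB_card kn.
have ii : forall E : {set 'I_n},
    (forall i, #|E :&: block n l r i| = r i) -> MDS_on (Gm g) (~: E) k.
  move=> E hE.
  have hS : forall i, #|~: E :&: block n l r i| = l.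
    move=> i; have := cardsID E (block n l r i); rewrite (card_blk nE) setIC hE.
    by rewrite setDE setIC => /eqP; rewrite eqn_add2l => /eqP.

  apply: MDS_from.
  - by move=> j _; apply: submx1.
  - exact: mxrank1.
  - move=> Z sZ cZ; apply: submx_full; rewrite /row_full inv ?cZ ?subsetT //.
    apply/forallP => i; rewrite -[X in (_ <= X)%N](hS i); apply: subset_leq_card.
    exact: setSI.
  - exact: leq_trans l1 lk.
  - have := cardsC E; rewrite card_ord (card_part nE E).
    rewrite (eq_bigr _ (fun i _ => hE i)) => e.
    have e2 : #|~: E| = (m * l)%N.
      by apply/eqP; rewrite -(eqn_add2l (\sum_(i < m) r i)) e; apply/eqP.
    by rewrite e2 ltnW.
pose E0 := ~: infoS infoB.
have hE0 : forall i, #|E0 :&: block n l r i| = r i.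
  move=> i; have := cardsID (infoS infoB) (block n l r i).
  rewrite (card_blk nE).
  have -> : block n l r i :&: infoS infoB = infoB i.
    apply/setP => x; rewrite inE; apply/andP/idP => [[xb xI]|xi].
      exact: (@info_blk n l m r infoB infoB_sub x i xI xb).
    by split; [apply: (subsetP (infoB_sub i)) | apply/bigcupP; exists i].
  rewrite infoB_card setDE setIC => e.
  by move: e; rewrite addnC => /eqP; rewrite eqn_add2r => /eqP.
exists (Gm g); split.
- exact: nE.
- exact: kn'.
- apply/eqP; rewrite eqn_leq rank_leq_row /=.
  have [rk _ _] := ii E0 hE0.
  rewrite -[X in (X <= _)%N]rk /restrict; exact: mxrankM_maxl.
- move=> i.
  have rV : \rank (rows g (infoB i)) = l.
    rewrite inv ?infoB_card ?subsetT //; apply: (@adm_info n l m r infoB infoB_sub infoB_card).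
    by apply/subsetP => x xi; apply/bigcupP; exists i.
  apply: (@MDS_from _ _ _ g _ <<rows g (infoB i)>>%MS).
  + by move=> j jb; rewrite genmxE; apply: inv2 => //; rewrite inE.
  + by rewrite mxrank_gen.
  + move=> Z sZ cZ; rewrite genmxE.
    have sZV : (rows g Z <= rows g (infoB i))%MS.
      by apply: rows_sub => j jZ; apply: inv2 (subsetP sZ j jZ); rewrite inE.
    have rZ : \rank (rows g Z) = l.
      rewrite inv ?cZ ?subsetT //.
      by apply/forallP => i'; rewrite -[X in (_ <= X)%N]cZ subset_leq_card // subsetIl.
    have := mxrank_leqif_eq sZV; rewrite rZ rV => /leqif_refl /andP [_].
    by [].
  + exact: l1.
  + by rewrite (card_blk nE) leq_addl.
- exact: ii.
Qed.
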